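(* Let $E$ be a graph with finitely many vertices and $K$ a field of characteristic $0$. Let $H\subseteq E^0$ be hereditary and saturated, $w\in B_H$ a breaking vertex with $M(w)=E^0\setminus H$, and $P=I(H,B_H\setminus\{w\})$ (a primitive ideal of ''type I''). Assume $L_K(E)/P$ is noncommutative. Then there exists $f\in E^1$ with $r(f)=w$ such that $\langle 1+2w^Hf^*,\ 1+2fw^H\rangle$ is a non-cyclic free subgroup of $L_K(E)^\times$.
   Context: A graph $E=(E^0,E^1,r,s)$; $L_K(E)$ is the free associative $K$-algebra on $E^0\cup E^1\cup\{e^*\}$ subject to $vv'=\delta_{v,v'}v$, $s(e)e=er(e)=e$, $r(e)e^*=e^*s(e)=e^*$, $e^*f=\delta_{e,f}r(e)$, and $v=\sum_{s(e)=v}ee^*$ for every regular vertex $v$ (emitting a finite nonzero number of edges); with $E^0$ finite it is unital with $1=\sum_v v$. Write $u\ge v$ if there is a path from $u$ to $v$; $M(v)=\{u\in E^0:u\ge v\}$. $H$ hereditary: $u\in H$, $u\ge v\Rightarrow v\in H$; saturated: for regular $v$, $r(s^{-1}(v))\subseteq H\Rightarrow v\in H$. A breaking vertex of $H$ is an infinite emitter $w\notin H$ with $1\le|s^{-1}(w)\cap r^{-1}(E^0\setminus H)|<\infty$; $B_H$ is the set of them; $w^H=w-\sum_{s(e)=w,\,r(e)\notin H}ee^*$. For $S\subseteq B_H$, $I(H,S)$ is the ideal of $L_K(E)$ generated by $H\cup\{v^H:v\in S\}$. *)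

(* Defs.v *)
From HB Require Import structures.
From mathcomp Require Import all_boot all_order all_algebra.
Set Implicit Arguments. Unset Strict Implicit. Unset Printing Implicit Defensive.
Import Order.TTheory GRing.Theory Num.Theory.
Local Open Scope ring_scope.

(* A graph E = (E^0, E^1, r, s): vertices V (finite), edges Ed (arbitrary
   type with decidable equality, possibly infinite), source s, range r. *)

Definition enumerates (Ed : eqType) (P : Ed -> Prop) (l : seq Ed) : Prop :=
  uniq l /\ forall e, P e <-> e \in l.

Definition regular_vertex (V : finType) (Ed : eqType) (s : Ed -> V) (v : V) :=
  exists l, enumerates (fun e => s e = v) l /\ l != [::].

Definition infinite_emitter (V : finType) (Ed : eqType) (s : Ed -> V) (v : V) :=
  ~ exists l, enumerates (fun e => s e = v) l.

Inductive path_geq (V : finType) (Ed : eqType) (s r : Ed -> V) : V -> V -> Prop :=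
  | pg_refl u : path_geq s r u u
  | pg_step e v : path_geq s r (r e) v -> path_geq s r (s e) v.

Definition hereditary (V : finType) (Ed : eqType) (s r : Ed -> V) (H : {set V}) :=
  forall u v, u \in H -> path_geq s r u v -> v \in H.

Definition saturated (V : finType) (Ed : eqType) (s r : Ed -> V) (H : {set V}) :=
  forall v, regular_vertex s v -> (forall e, s e = v -> r e \in H) -> v \in H.

Definition breaking_vertex (V : finType) (Ed : eqType) (s r : Ed -> V)
    (H : {set V}) (w : V) :=
  w \notin H /\ infinite_emitter s w /\
  exists l, enumerates (fun e => s e = w /\ r e \notin H) l /\ l != [::].

Definition leavitt_family (K : fieldType) (V : finType) (Ed : eqType)
    (s r : Ed -> V) (A : algType K) (pv : V -> A) (pe ps : Ed -> A) : Prop :=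
  [/\ (forall v v', pv v * pv v' = if v == v' then pv v else 0),
      (forall e, pv (s e) * pe e = pe e /\ pe e * pv (r e) = pe e),
      (forall e, pv (r e) * ps e = ps e /\ ps e * pv (s e) = ps e),
      (forall e f, ps e * pe f = if e == f then pv (r e) else 0) &
      (forall v l, enumerates (fun e => s e = v) l -> l != [::] ->
          pv v = \sum_(e <- l) pe e * ps e)].

(* (not necessarily unital) K-algebra homomorphism *)
Definition alg_hom (K : fieldType) (A B : algType K) (phi : A -> B) : Prop :=
  [/\ (forall x y, phi (x + y) = phi x + phi y),
      (forall (k : K) x, phi (k *: x) = k *: phi x) &
      (forall x y, phi (x * y) = phi x * phi y)].

(* (A, pv, pe, ps) is the Leavitt path algebra L_K(E): the universal
   K-algebra generated by a Leavitt E-family (i.e. the free associative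
   K-algebra on E^0, E^1, (E^1)^* modulo the Leavitt relations). *)
Definition is_leavitt_path_algebra (K : fieldType) (V : finType) (Ed : eqType)
    (s r : Ed -> V) (A : algType K) (pv : V -> A) (pe ps : Ed -> A) : Prop :=
  leavitt_family s r pv pe ps /\
  forall (B : algType K) (qv : V -> B) (qe qs : Ed -> B),
    leavitt_family s r qv qe qs ->
    (exists phi : A -> B, alg_hom phi /\
       (forall v, phi (pv v) = qv v) /\
       (forall e, phi (pe e) = qe e) /\ (forall e, phi (ps e) = qs e)) /\
    (forall phi psi : A -> B, alg_hom phi -> alg_hom psi ->
       (forall v, phi (pv v) = psi (pv v)) ->
       (forall e, phi (pe e) = psi (pe e)) ->
       (forall e, phi (ps e) = psi (ps e)) ->
       forall x, phi x = psi x).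

Definition ring_ideal (R : pzRingType) (I : R -> Prop) : Prop :=
  [/\ I 0, (forall x y, I x -> I y -> I (x + y)) &
      (forall a x, I x -> I (a * x) /\ I (x * a))].

Definition ideal_generated (R : pzRingType) (X : R -> Prop) (x : R) : Prop :=
  forall I : R -> Prop, ring_ideal I -> (forall y, X y -> I y) -> I x.

(* generators of I(H, S): H together with v^H for v in S *)
Definition IHS_generators (K : fieldType) (V : finType) (Ed : eqType)
    (s r : Ed -> V) (A : algType K) (pv : V -> A) (pe ps : Ed -> A)
    (H : {set V}) (S : V -> Prop) (x : A) : Prop :=
  (exists v, v \in H /\ x = pv v) \/
  (exists v l, S v /\ enumerates (fun e => s e = v /\ r e \notin H) l /\
     x = pv v - \sum_(e <- l) pe e * ps e).

Definition letter_val (R : unitRingType) (l : R * bool) : R :=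
  if l.2 then l.1 else l.1^-1.

Definition word_val (R : unitRingType) (w : seq (R * bool)) : R :=
  \prod_(l <- w) letter_val l.

Fixpoint reduced_word (R : unitRingType) (w : seq (R * bool)) : bool :=
  match w with
  | x :: ((y :: _) as t) => ~~ ((x.1 == y.1) && (x.2 != y.2)) && reduced_word t
  | _ => true
  end.

Definition subgroup_gen (R : unitRingType) (S : R -> Prop) (g : R) : Prop :=
  exists w : seq (R * bool), (forall l, l \in w -> S l.1) /\ g = word_val w.

Definition free_subgroup (R : unitRingType) (G : R -> Prop) : Prop :=
  exists X : R -> Prop,
    (forall x, X x -> x \is a GRing.unit) /\
    (forall g, G g <-> subgroup_gen X g) /\
    (forall w : seq (R * bool), w != [::] -> reduced_word w ->
        (forall l, l \in w -> X l.1) -> word_val w != 1).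

Definition cyclic_subgroup (R : unitRingType) (G : R -> Prop) : Prop :=
  exists g : R, forall h, G h <-> exists n : int, h = g ^ n.

(* Main.v *)
Require Import Defs.
From HB Require Import structures.
From mathcomp Require Import all_boot all_order all_algebra.
From mathcomp Require Import boolp.
From mathcomp Require Import zify ring.
Set Implicit Arguments. Unset Strict Implicit. Unset Printing Implicit Defensive.
Import Order.TTheory GRing.Theory Num.Theory.
Local Open Scope ring_scope.

Section OpDef.
Variables (K : fieldType) (T : Type).
Definition fadd (f g : T -> K) := fun p => f p + g p.
Definition fsc (k : K) (f : T -> K) := fun p => k * f p.
Record Op := MkOp { opf :> (T -> K) -> (T -> K);
  opA : forall f g, opf (fadd f g) = fadd (opf f) (opf g);
  opZ : forall k f, opf (fsc k f) = fsc k (opf f) }.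
Lemma op_ext (x y : Op) : (forall f p, x f p = y f p) -> x = y.
Proof.
case: x y => [x xA xZ] [y yA yZ] /= H.
have E : x = y by apply: funext => f; apply: funext => p; exact: H.
subst y. congr MkOp; exact: Prop_irrelevance.
Qed.
End OpDef.

HB.instance Definition _ K T := gen_eqMixin (Op K T).
HB.instance Definition _ K T := gen_choiceMixin (Op K T).

Section OpAlg.
Variables (K : fieldType) (T : Type).
Local Notation Op := (Op K T).
Program Definition op0 : Op := @MkOp K T (fun _ _ => 0) _ _.
Next Obligation. by apply: funext => p; rewrite /fadd addr0. Qed.
Next Obligation. by apply: funext => p; rewrite /fsc mulr0. Qed.
Program Definition opN (x : Op) : Op := @MkOp K T (fun f p => - x f p) _ _.
Next Obligation. by apply: funext => p; rewrite opA /fadd opprD. Qed.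
Next Obligation. by apply: funext => p; rewrite opZ /fsc mulrN. Qed.
Program Definition opD (x y : Op) : Op := @MkOp K T (fun f p => x f p + y f p) _ _.
Next Obligation. by apply: funext => p; rewrite !opA /fadd addrACA. Qed.
Next Obligation. by apply: funext => p; rewrite !opZ /fsc mulrDr. Qed.
Program Definition op1 : Op := @MkOp K T (fun f => f) _ _.
Program Definition opM (x y : Op) : Op := @MkOp K T (fun f => x (y f)) _ _.
Next Obligation. by rewrite !opA. Qed.
Next Obligation. by rewrite !opZ. Qed.
Program Definition opS (k : K) (x : Op) : Op := @MkOp K T (fun f p => k * x f p) _ _.
Next Obligation. by apply: funext => p; rewrite opA /fadd mulrDr. Qed.
Next Obligation. by apply: funext => p; rewrite opZ /fsc mulrCA. Qed.

Lemma opDA : associative opD. Proof. by move=> x y z; apply: op_ext => f p /=; rewrite addrA. Qed.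
Lemma opDC : commutative opD. Proof. by move=> x y; apply: op_ext => f p /=; rewrite addrC. Qed.
Lemma op0D : left_id op0 opD. Proof. by move=> x; apply: op_ext => f p /=; rewrite add0r. Qed.
Lemma opND : left_inverse op0 opN opD. Proof. by move=> x; apply: op_ext => f p /=; rewrite addNr. Qed.
HB.instance Definition _ := GRing.isZmodule.Build Op opDA opDC op0D opND.

End OpAlg.
Section OpRing.
Variables (K : fieldType) (X : Type).
Local Notation T := (seq X).
Local Notation Op := (Op K T).
Lemma opMA : associative (@opM K T). Proof. by move=> x y z; apply: op_ext. Qed.
Lemma op1M : left_id (@op1 K T) (@opM K T). Proof. by move=> x; apply: op_ext. Qed.
Lemma opM1 : right_id (@op1 K T) (@opM K T). Proof. by move=> x; apply: op_ext. Qed.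
Lemma opMDl : left_distributive (@opM K T) +%R. Proof. by move=> x y z; apply: op_ext. Qed.
Lemma opMDr : right_distributive (@opM K T) +%R.
Proof. move=> x y z; apply: op_ext => f p /=. by rewrite opA. Qed.
Lemma op1_neq0 : (@op1 K T) != 0.
Proof.
apply/eqP => /(congr1 (fun x : Op => x (fun _ => 1) [::])) /=; exact/eqP/oner_neq0.
Qed.
HB.instance Definition _ := GRing.Zmodule_isNzRing.Build Op opMA op1M opM1 opMDl opMDr op1_neq0.
Lemma opSA a b (v : Op) : opS a (opS b v) = opS (a * b) v.
Proof. by apply: op_ext => f p /=; rewrite mulrA. Qed.
Lemma opS1 : left_id 1 (@opS K T). Proof. by move=> x; apply: op_ext => f p /=; rewrite mul1r. Qed.
Lemma opSDr : right_distributive (@opS K T) +%R.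
Proof. by move=> k x y; apply: op_ext => f p /=; rewrite mulrDr. Qed.
Lemma opSDl v : {morph (@opS K T)^~ v: a b / a + b}.
Proof. by move=> a b; apply: op_ext => f p /=; rewrite mulrDl. Qed.
HB.instance Definition _ := GRing.Zmodule_isLmodule.Build K Op opSA opS1 opSDr opSDl.
Lemma opSAl (a : K) (u v : Op) : a *: (u * v) = (a *: u) * v.
Proof. by apply: op_ext. Qed.
HB.instance Definition _ := GRing.Lmodule_isLalgebra.Build K Op opSAl.
Lemma opSAr (a : K) (u v : Op) : a *: (u * v) = u * (a *: v).
Proof. apply: op_ext => f p /=. by rewrite -[fun p => a * _]/(fsc a _) opZ. Qed.
HB.instance Definition _ := GRing.Lalgebra_isAlgebra.Build K Op opSAr.
End OpRing.

Lemma op_sum (K : fieldType) (X : Type) (I : Type) (l : seq I) (F : I -> Op K (seq X)) f p :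
  (\sum_(i <- l) F i) f p = \sum_(i <- l) F i f p.
Proof.
elim: l => [|i l IH]; first by rewrite !big_nil.
by rewrite !big_cons /= IH.
Qed.

Lemma sum_pick (R : nmodType) (I : eqType) (l : seq I) (x : I) (G : I -> R) :
  uniq l -> \sum_(i <- l) (if x == i then G i else 0) = if x \in l then G x else 0.
Proof.
elim: l => [|i l IH] /=; first by rewrite big_nil.
case/andP => il ul; rewrite big_cons IH // in_cons.
case: (eqVneq x i) => [->|] /=.
- by rewrite (negbTE il) addr0.
- by rewrite add0r.
Qed.

Section Rep.
Variables (K : fieldType) (V : finType) (Ed : eqType) (s r : Ed -> V) (w : V).
Local Notation T := (seq Ed).
Local Notation Op := (Op K T).
Definition src (p : T) := if p is e :: _ then s e else w.
Fixpoint valid (p : T) : bool := if p is e :: q then (r e == src q) && valid q else true.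

Program Definition Pv (v : V) : Op :=
  @MkOp K T (fun f p => if valid p && (src p == v) then f p else 0) _ _.
Next Obligation. by apply: funext => p; rewrite /fadd; case: ifP; rewrite ?addr0. Qed.
Next Obligation. by apply: funext => p; rewrite /fsc; case: ifP; rewrite ?mulr0. Qed.
Program Definition Pe (e : Ed) : Op :=
  @MkOp K T (fun f q => if q is e' :: p then (if (e' == e) && valid q then f p else 0) else 0) _ _.
Next Obligation. by apply: funext => [[|e' p]]; rewrite /fadd ?addr0 //; case: ifP; rewrite ?addr0. Qed.
Next Obligation. by apply: funext => [[|e' p]]; rewrite /fsc ?mulr0 //; case: ifP; rewrite ?mulr0. Qed.
Program Definition Ps (e : Ed) : Op :=
  @MkOp K T (fun f p => if valid (e :: p) then f (e :: p) else 0) _ _.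
Next Obligation. by apply: funext => p; rewrite /fadd; case: ifP; rewrite ?addr0. Qed.
Next Obligation. by apply: funext => p; rewrite /fsc; case: ifP; rewrite ?mulr0. Qed.

Hypothesis hw : forall v, regular_vertex s v -> v <> w.

Lemma rep_family : leavitt_family s r Pv Pe Ps.
Proof.
split.
- move=> v v'; apply: op_ext => f p /=.
  case: (eqVneq v v') => [<-|nvv'] /=.
  + by case: (valid p && (src p == v)).
  + case: (valid p) => //=; case: (eqVneq (src p) v) => [sv|] //=.
    by rewrite sv (negbTE nvv').
- move=> e; split; apply: op_ext => f [|e' p] /=.
  + by case: ifP.
  + case: (eqVneq e' e) => [->|_] /=; last by case: ifP.
    by rewrite eqxx andbT; case: (_ && _).
  + by [].
  + case: (eqVneq e' e) => [->|_] //=.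
    by case: (eqVneq (r e) (src p)) => //= _; case: (valid p).
- move=> e; split; apply: op_ext => f p /=.
  + by case: (eqVneq (r e) (src p)) => //= _; case: (valid p).
  + by rewrite eqxx andbT; case: (_ && _).
- move=> e e'; apply: op_ext => f p /=.
  case: (eqVneq e e') => [_|_] /=.
  + by rewrite [src p == _]eq_sym andbC; case: (_ && _).
  + by case: (_ && _).
- move=> v l [ul Hl] ln0; apply: op_ext => f p /=.
  rewrite op_sum /=.
  case: p => [|e' p] /=.
  + have -> : (w == v) = false.
      apply/negbTE/eqP => wv; apply: (hw (v:=v)) => //; by exists l.
    by rewrite big1.
  + rewrite (eq_bigr (fun i => if e' == i then (if (r e' == src p) && valid p then
        (if (r i == src p) && valid p then f (i :: p) else 0) else 0) else 0)); last first.
      by move=> i _; case: (e' == i).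
    rewrite sum_pick //.
    have -> : (e' \in l) = (s e' == v) by apply/idP/eqP => /Hl.
    by case: (s e' == v); rewrite ?andbT ?andbF //; case: (_ && _).
Qed.
End Rep.

Lemma alg_hom0 (K : fieldType) (A B : algType K) (phi : A -> B) : alg_hom phi -> phi 0 = 0.
Proof.
case=> hA _ _; have := hA 0 0; rewrite addr0 => E.
by apply: (addrI (phi 0)); rewrite addr0 -E.
Qed.
Lemma alg_homB (K : fieldType) (A B : algType K) (phi : A -> B) x y :
  alg_hom phi -> phi (x - y) = phi x - phi y.
Proof.
move=> h; have := h => -[hA _ _].
have hN : phi (- y) = - phi y.
  apply/eqP; rewrite -subr_eq0 opprK -hA addNr; exact/eqP/alg_hom0.
by rewrite hA hN.
Qed.
Lemma alg_hom_sum (K : fieldType) (A B : algType K) (phi : A -> B) I (l : seq I) (F : I -> A) :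
  alg_hom phi -> phi (\sum_(i <- l) F i) = \sum_(i <- l) phi (F i).
Proof.
move=> h; elim: l => [|i l IH]; first by rewrite !big_nil alg_hom0.
by rewrite !big_cons; case: h => hA _ _; rewrite hA IH.
Qed.

Lemma wH_neq0 (K : fieldType) (V : finType) (Ed : eqType) (s r : Ed -> V)
    (A : algType K) (pv : V -> A) (pe ps : Ed -> A) (w : V) (l : seq Ed) :
  is_leavitt_path_algebra s r pv pe ps -> infinite_emitter s w ->
  pv w - \sum_(e <- l) pe e * ps e != 0.
Proof.
move=> [_ HU] Hw.
have hw : forall v, regular_vertex s v -> v <> w.
  by move=> v [l' [El _]] vw; apply: Hw; exists l'; rewrite -vw.
have [[phi [hphi [hv [he hs]]]] _] := HU _ _ _ _ (rep_family K r hw).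
apply/eqP => E.
have := congr1 phi E; rewrite alg_homB // alg_hom_sum // alg_hom0 // hv.
have hm : forall e, phi (pe e * ps e) = Pe K s r w e * Ps K s r w e.
  by move=> e; case: hphi => _ _ ->; rewrite he hs.
under eq_bigr do rewrite hm.
move=> /(congr1 (fun x : Op K (seq Ed) => x (fun p => if p is [::] then 1 else 0) [::])) /=.
rewrite op_sum /= big1 // subr0 => /eqP; rewrite eqxx /=.
by rewrite oner_eq0.
Qed.


Record M4 := mk4 { m00 : int; m01 : int; m10 : int; m11 : int }.
Definition M0 := mk4 0 0 0 0.
Definition epsz (b : bool) : int := if b then 2 else -2.
Definition stepM (k sg : bool) (N : M4) : M4 :=
  let e := epsz sg in
  if k then mk4 (m00 N + m10 N * e) (m01 N + e + m11 N * e) (m10 N) (m11 N)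
  else mk4 (m00 N) (m01 N) (m10 N + e + m00 N * e) (m11 N + m01 N * e).
Definition MW (w : seq (bool * bool)) : M4 := foldr (fun l N => stepM l.1 l.2 N) M0 w.

Definition region (c : bool * bool) (v : int * int) : Prop :=
  let: (u, t) := v in
  if c.1 then (if c.2 then (0 < t /\ t < u) \/ (t < 0 /\ u < t)
               else (0 < t /\ u < - t) \/ (t < 0 /\ - t < u))
  else (if c.2 then (0 < u /\ u < t) \/ (u < 0 /\ t < u)
        else (0 < u /\ t < - u) \/ (u < 0 /\ - u < t)).
Definition Lapp (l : bool * bool) (v : int * int) : int * int :=
  let: (u, t) := v in
  if l.1 then (u + epsz l.2 * t, t) else (u, t + epsz l.2 * u).
Definition mu (v : int * int) : int := `|v.1| + `|v.2|.
Lemma step_region l c v : region c v -> ~~ ((l.1 == c.1) && (l.2 != c.2)) ->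
  region l (Lapp l v) /\ mu v < mu (Lapp l v).
Proof.
case: l => [[] []]; case: c => [[] []]; case: v => u t /= H //= _; rewrite /mu /=; lia.
Qed.

Fixpoint redL (w : seq (bool * bool)) : bool :=
  match w with
  | l :: ((m :: _) as t) => ~~ ((l.1 == m.1) && (l.2 != m.2)) && redL t
  | _ => true
  end.

Definition Wapp (w : seq (bool * bool)) v := foldr Lapp v w.

Lemma word_region w l c v : redL (l :: w) -> region c v ->
  ~~ (((last l w).1 == c.1) && ((last l w).2 != c.2)) ->
  region l (Wapp (l :: w) v) /\ mu v < mu (Wapp (l :: w) v).
Proof.
elim: w l => [|m w IH] l /=; first by move=> _; exact: step_region.
case/andP => Hlm Hred Hc Hlast.
have [Hr Hmu] := IH m Hred Hc Hlast.
have [Hr' Hmu'] := step_region Hr Hlm.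
by split => //; apply: lt_trans Hmu'.
Qed.

Definition app (N : M4) (v : int * int) : int * int :=
  let: (u, t) := v in ((1 + m00 N) * u + m01 N * t, m10 N * u + (1 + m11 N) * t).

Lemma app_step k sg N v : app (stepM k sg N) v = Lapp (k, sg) (app N v).
Proof.
case: v => u t; case: k; rewrite /= /app /=; congr pair; ring.
Qed.

Lemma app_MW w v : app (MW w) v = Wapp w v.
Proof.
elim: w => [|l w IH] /=; first by case: v => u t; rewrite /app /=; congr pair; ring.
by rewrite app_step IH; case: l.
Qed.

Definition pt (c : bool * bool) : int * int :=
  match c with
  | (true, true) => (2, 1) | (true, false) => (2%:Z, - 1%:Z)
  | (false, true) => (1, 2) | (false, false) => (1%:Z, - 2%:Z) end.
Lemma pt_region c : region c (pt c).
Proof. by case: c => [[] []] /=; lia. Qed.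

Lemma sanov w : w != [::] -> redL w -> MW w <> M0.
Proof.
case: w => [//|l w] _ Hred E.
have [_ Hmu] : region l (Wapp (l :: w) (pt (last l w))) /\
   mu (pt (last l w)) < mu (Wapp (l :: w) (pt (last l w))).
  by apply: word_region => //; [exact: pt_region | rewrite eqxx /= eqxx].
move: Hmu; rewrite -app_MW E; case: (pt _) => u t; rewrite /app /= /mu /=.
lia.
Qed.

Section XY.
Variables (R : pzRingType) (x y : R).
Hypotheses (x2 : x * x = 0) (y2 : y * y = 0) (xyx : x * y * x = x) (yxy : y * x * y = y).

Definition Phi (N : M4) : R :=
  (x * y) *~ m00 N + x *~ m01 N + y *~ m10 N + (y * x) *~ m11 N.

Lemma xPhi N : x * Phi N = (x * y) *~ m10 N + x *~ m11 N.
Proof.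
rewrite /Phi !mulrDr !mulrzAr !mulrA x2 !mul0r !mul0rz !add0r xyx.
by [].
Qed.
Lemma yPhi N : y * Phi N = y *~ m00 N + (y * x) *~ m01 N.
Proof.
rewrite /Phi !mulrDr !mulrzAr !mulrA yxy y2 !mul0r !mul0rz !addr0.
by [].
Qed.

Lemma stepPhi k sg N :
  (1 + (if k then x else y) *~ epsz sg) * (1 + Phi N) = 1 + Phi (stepM k sg N).
Proof.
rewrite mulrDl mul1r mulrDr mulr1 mulrzAl.
case: k; rewrite ?xPhi ?yPhi /Phi /stepM /=.
- rewrite !mulrzDr !mulrzA mulrzDl !addrA.
  by rewrite [LHS](ACl (1*2*7*3*6*8*4*5)).
- rewrite !mulrzDr !mulrzA mulrzDl !addrA.
  by rewrite [LHS](ACl (1*2*3*4*6*7*5*8)).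
Qed.
End XY.

Section Words.
Variables (R : unitRingType) (x y : R).
Hypotheses (x2 : x * x = 0) (y2 : y * y = 0) (xyx : x * y * x = x) (yxy : y * x * y = y).

Lemma sq0_inv (z : R) : z * z = 0 ->
  (1 + z *~ 2) * (1 + z *~ (-2)) = 1 /\ (1 + z *~ (-2)) * (1 + z *~ 2) = 1.
Proof.
move=> z2; rewrite !mulrDl !mul1r !mulrDr !mulr1 !mulrzAl !mulrzAr z2 !mul0rz !addr0.
by split; rewrite -addrA ?mulrNz ?addNr ?addrN ?addr0 //; rewrite -[z + z]/(z *~ 2) addNr addr0.
Qed.

Let a := 1 + x *~ 2.
Let b := 1 + y *~ 2.
Lemma a_unit : a \is a GRing.unit.
Proof. by apply/unitrP; exists (1 + x *~ (-2)); have [? ?] := sq0_inv x2. Qed.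
Lemma b_unit : b \is a GRing.unit.
Proof. by apply/unitrP; exists (1 + y *~ (-2)); have [? ?] := sq0_inv y2. Qed.
Lemma a_inv : a^-1 = 1 + x *~ (-2).
Proof.
have [h1 h2] := sq0_inv x2.
by rewrite -[RHS](mulrK a_unit) h2 mul1r.
Qed.
Lemma b_inv : b^-1 = 1 + y *~ (-2).
Proof.
have [h1 h2] := sq0_inv y2.
by rewrite -[RHS](mulrK b_unit) h2 mul1r.
Qed.

Hypothesis anb : a != b.

Definition conv (l : R * bool) : bool * bool := (l.1 == a, l.2).

Lemma word_Phi (w : seq (R * bool)) : (forall l, l \in w -> l.1 = a \/ l.1 = b) ->
  word_val w = 1 + Phi x y (MW (map conv w)).
Proof.
elim: w => [|l w IH] Hw /=.
  by rewrite /word_val big_nil /Phi /= !mulr0z !addr0.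
rewrite /word_val big_cons -/(word_val w) IH; last by move=> m mw; apply: Hw; rewrite in_cons mw orbT.
rewrite -stepPhi //.
have bna : (b == a) = false by rewrite eq_sym (negbTE anb).
case: l Hw => g sg Hw.
have [] := Hw (g, sg) (mem_head _ _) => /= ->; rewrite /letter_val /= ?eqxx ?bna /=;
  clear Hw; case: sg => /=; rewrite ?a_inv ?b_inv //.
Qed.

Lemma red_conv (w : seq (R * bool)) : (forall l, l \in w -> l.1 = a \/ l.1 = b) ->
  reduced_word w -> redL (map conv w).
Proof.
elim: w => [//|l w IH] Hw /=.
case: w IH Hw => [//|m w] IH Hw /= /andP[Hlm Hred].
apply/andP; split; last first.
  by apply: IH => // k kw; apply: Hw; rewrite in_cons kw orbT.
have mm : m \in [:: l, m & w] by rewrite in_cons mem_head orbT.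
have e1 : (l.1 == m.1) = ((l.1 == a) == (m.1 == a)).
  have [] := Hw l (mem_head _ _) => ->;
  have [] := Hw m mm => ->;
  by rewrite ?eqxx // eq_sym ?(negbTE anb).
by rewrite -e1.
Qed.
End Words.

Section Inj.
Variables (K : fieldType) (A : lalgType K) (x y : A).
Hypotheses (x2 : x * x = 0) (y2 : y * y = 0) (xyx : x * y * x = x) (yxy : y * x * y = y).
Hypothesis hK : [pchar K] =i pred0.

Lemma zm0 (z : A) (m : int) : z != 0 -> z *~ m = 0 -> m = 0.
Proof.
move=> nz; rewrite -scaler_int => /eqP; rewrite scaler_eq0 (negbTE nz) orbF.
have h := (pcharf0P K).1 hK.
case: m => n /=.
- by rewrite h => /eqP ->.
- by rewrite NegzE intrN oppr_eq0 (_ : (n.+1)%:~R = n.+1%:R :> K) // h.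
Qed.

Lemma PhiRx N : Phi x y N * x = x *~ m00 N + (y * x) *~ m10 N.
Proof.
rewrite /Phi !mulrDl !mulrzAl -!mulrA x2 !mulr0 !mul0rz !addr0.
by rewrite mulrA xyx.
Qed.
Lemma PhiRy N : Phi x y N * y = (x * y) *~ m01 N + y *~ m11 N.
Proof.
rewrite /Phi !mulrDl !mulrzAl -!mulrA y2 !mulr0 !mul0rz add0r addr0.
by rewrite mulrA yxy.
Qed.

Lemma Phi_inj N : x * y != 0 -> Phi x y N = 0 -> N = M0.
Proof.
move=> nxy E.
have nx : x != 0 by apply: contraNneq nxy => ->; rewrite mul0r.
have ny : y != 0 by apply: contraNneq nxy => ->; rewrite mulr0.
have nyx : y * x != 0.
  apply: contraNneq nxy => h; by rewrite -xyx -(mulrA x y x) h mulr0 mul0r.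
have e00 : m00 N = 0.
  apply: (zm0 nyx); have := congr1 (fun z => y * (z * x)) E.
  by rewrite /= mul0r mulr0 PhiRx mulrDr !mulrzAr !mulrA y2 mul0r mul0rz addr0.
have e11 : m11 N = 0.
  apply: (zm0 nxy); have := congr1 (fun z => x * (z * y)) E.
  by rewrite /= mul0r mulr0 PhiRy mulrDr !mulrzAr !mulrA x2 mul0r mul0rz add0r.
have e01 : m01 N = 0.
  apply: (zm0 ny); have := congr1 (fun z => y * (z * y)) E.
  by rewrite /= mul0r mulr0 PhiRy mulrDr !mulrzAr !mulrA yxy y2 mul0rz addr0.
have e10 : m10 N = 0.
  apply: (zm0 nx); have := congr1 (fun z => x * (z * x)) E.
  by rewrite /= mul0r mulr0 PhiRx mulrDr !mulrzAr !mulrA xyx x2 mul0rz add0r.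
by clear E; case: N e00 e11 e01 e10 => ? ? ? ? /= -> -> -> ->.
Qed.
End Inj.


Lemma path_last (V : finType) (Ed : eqType) (s r : Ed -> V) u v :
  path_geq s r u v -> u = v \/ exists g, r g = v.
Proof.
elim => [u'|e v' _ IH]; first by left.
by right; case: IH => [<-|[g <-]]; [exists e | exists g].
Qed.

Section Lv.
Variables (K : fieldType) (V : finType) (Ed : eqType) (s r : Ed -> V)
  (A : algType K) (pv : V -> A) (pe ps : Ed -> A).
Hypothesis Hf : leavitt_family s r pv pe ps.

Lemma pv_pe v e : pv v * pe e = if v == s e then pe e else 0.
Proof.
case: Hf => h1 h2 _ _ _; have E := (h2 e).1.
rewrite -{1}E mulrA h1; case: eqP => [->|_]; [exact: E | by rewrite mul0r].
Qed.
Lemma ps_pv e v : ps e * pv v = if s e == v then ps e else 0.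
Proof.
case: Hf => h1 _ h3 _ _; have E := (h3 e).2.
rewrite -{1}E -mulrA h1; case: eqP => [_|_]; [exact: E | by rewrite mulr0].
Qed.
Lemma pv_idem v : pv v * pv v = pv v.
Proof. by case: Hf => h1 _ _ _ _; rewrite h1 eqxx. Qed.
Lemma ps_pe e f : ps e * pe f = if e == f then pv (r e) else 0.
Proof. by case: Hf. Qed.
Lemma pe_pvr e : pe e * pv (r e) = pe e.
Proof. by case: Hf => _ h2 _ _ _; case: (h2 e). Qed.
Lemma pv_psr e : pv (r e) * ps e = ps e.
Proof. by case: Hf => _ _ h3 _ _; case: (h3 e). Qed.

Variables (w : V) (l : seq Ed) (Pl : Ed -> Prop).
Hypothesis ul : uniq l.
Hypothesis srcl : forall e, e \in l -> s e = w.
Let S := \sum_(e <- l) pe e * ps e.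

Lemma ps_S f : ps f * S = if f \in l then ps f else 0.
Proof.
rewrite /S mulr_sumr.
under eq_bigr do rewrite mulrA ps_pe.
rewrite (eq_bigr (fun e => if f == e then pv (r f) * ps e else 0)); last first.
  by move=> e _; case: eqP => [->|_]; rewrite ?mul0r.
by rewrite sum_pick // pv_psr.
Qed.
Lemma S_pe f : S * pe f = if f \in l then pe f else 0.
Proof.
rewrite /S mulr_suml.
under eq_bigr do rewrite -mulrA ps_pe.
rewrite (eq_bigr (fun e => if f == e then pe e * pv (r e) else 0)); last first.
  by move=> e _; case: (eqVneq e f) => [_|_]; rewrite ?mulr0.
rewrite sum_pick //; case: ifP => // _; exact: pe_pvr.
Qed.
Lemma pvS : pv w * S = S.
Proof.
rewrite /S mulr_sumr; apply: eq_big_seq => e el.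
by rewrite mulrA pv_pe (srcl el) eqxx.
Qed.
Lemma Spv : S * pv w = S.
Proof.
rewrite /S mulr_suml; apply: eq_big_seq => e el.
by rewrite -mulrA ps_pv (srcl el) eqxx.
Qed.
Lemma SS : S * S = S.
Proof.
rewrite {1}/S mulr_suml /S; apply: eq_big_seq => e el.
by rewrite -mulrA -/S ps_S el.
Qed.
Lemma wH_idem : (pv w - S) * (pv w - S) = pv w - S.
Proof.
by rewrite mulrBl !mulrBr pv_idem pvS Spv SS subrr subr0.
Qed.
Lemma wH_pv : (pv w - S) * pv w = pv w - S.
Proof. by rewrite mulrBl pv_idem Spv. Qed.
Lemma ps_wH f : (s f == w) = (f \in l) -> ps f * (pv w - S) = 0.
Proof. by move=> E; rewrite mulrBr ps_pv ps_S E subrr. Qed.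
Lemma wH_pe f : (s f == w) = (f \in l) -> (pv w - S) * pe f = 0.
Proof. by move=> E; rewrite mulrBl pv_pe S_pe eq_sym E subrr. Qed.
End Lv.

Theorem theorem4p5 (K : fieldType) (V : finType) (Ed : eqType) (s r : Ed -> V)
    (A : unitAlgType K) (pv : V -> A) (pe ps : Ed -> A)
    (H : {set V}) (w : V) :
  [pchar K] =i pred0 ->
  is_leavitt_path_algebra s r pv pe ps ->
  hereditary s r H -> saturated s r H ->
  breaking_vertex s r H w ->
  (forall u, path_geq s r u w <-> u \notin H) ->
  let P := ideal_generated
             (IHS_generators s r pv pe ps H
                (fun v => breaking_vertex s r H v /\ v <> w)) in
  (exists x y : A, ~ P (x * y - y * x)) ->
  forall l : seq Ed, enumerates (fun e => s e = w /\ r e \notin H) l ->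
  let wH := pv w - \sum_(e <- l) pe e * ps e in
  exists f : Ed, r f = w /\
    let a := 1 + 2%:R * (wH * ps f) in
    let b := 1 + 2%:R * (pe f * wH) in
    [/\ a \is a GRing.unit, b \is a GRing.unit,
        free_subgroup (subgroup_gen (fun x => x = a \/ x = b)) &
        ~ cyclic_subgroup (subgroup_gen (fun x => x = a \/ x = b))].
Proof.
move=> hK HL _ _ [wnH [Hinf [l0 [[_ El0] l0n0]]]] Hpath P _ l [ul El] wH.
have Hf := HL.1.
have wH0 : wH != 0 by rewrite /wH; exact: wH_neq0 HL Hinf.
have srcl : forall e, e \in l -> s e = w by move=> e /El [].
have [f rf] : exists f, r f = w.
  case: l0 El0 l0n0 => [//|e l0'] El0 _.
  have [se re] := (El0 e).2 (mem_head _ _).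
  have := (Hpath (r e)).2 re; case/path_last => [<-|[g <-]]; by eexists.
exists f; split => //.
have Ef : (s f == w) = (f \in l).
  apply/eqP/idP => [sf|/El [] //]; apply/El; split => //; by rewrite rf.
set x := wH * ps f; set y := pe f * wH.
have psf_wH : ps f * wH = 0 by exact: (ps_wH Hf ul Ef).
have wH_pef : wH * pe f = 0 by exact: (wH_pe Hf ul Ef).
have wHi : wH * wH = wH by exact: (wH_idem Hf ul srcl).
have wHpv : wH * pv w = wH by exact: (wH_pv Hf srcl).
have psfpef : ps f * pe f = pv w by rewrite (ps_pe Hf) eqxx rf.
have x2 : x * x = 0 by rewrite /x -mulrA (mulrA (ps f)) psf_wH mul0r mulr0.
have y2 : y * y = 0 by rewrite /y -mulrA (mulrA wH) wH_pef mul0r mulr0.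
have xy : x * y = wH by rewrite /x /y -mulrA (mulrA (ps f)) psfpef mulrA wHpv wHi.
have xyx : x * y * x = x by rewrite xy /x mulrA wHi.
have yxy : y * x * y = y by rewrite -mulrA xy /y -mulrA wHi.
have -> : 1 + 2%:R * x = 1 + x *~ 2 by rewrite mulr_natl.
have -> : 1 + 2%:R * y = 1 + y *~ 2 by rewrite mulr_natl.
have xy0 : x * y != 0 by rewrite xy.
have anb : 1 + x *~ 2 != 1 + y *~ 2.
  apply/eqP => /addrI E.
  have := congr1 (fun z => x * z) E; rewrite /= !mulrzAr x2 mul0rz => /esym.
  by move/(zm0 hK xy0).
have au := a_unit x2; have bu := a_unit y2.
have Hfree : forall wd : seq (A * bool), wd != [::] -> reduced_word wd ->
    (forall l, l \in wd -> l.1 = 1 + x *~ 2 \/ l.1 = 1 + y *~ 2) -> word_val wd != 1.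
  move=> wd wn red Hwd; rewrite (word_Phi x2 y2 xyx yxy anb Hwd).
  apply/eqP => E.
  have : Phi x y (MW [seq conv x i | i <- wd]) = 0.
    by apply: (addrI 1); rewrite addr0.
  move/(Phi_inj x2 y2 xyx yxy hK xy0).
  apply: sanov; first by rewrite -size_eq0 size_map size_eq0.
  exact: (red_conv anb Hwd red).
split => //.
- exists (fun z => z = 1 + x *~ 2 \/ z = 1 + y *~ 2); split; first by move=> z [] ->.
  split => // wd wn red Hwd; exact: Hfree.
- move=> [g Hg].
  have Ga : subgroup_gen (fun z => z = 1 + x *~ 2 \/ z = 1 + y *~ 2) (1 + x *~ 2).
    exists [:: (1 + x *~ 2, true)]; split; first by move=> m; rewrite inE => /eqP ->; left.
    by rewrite /word_val big_cons big_nil mulr1.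
  have Gb : subgroup_gen (fun z => z = 1 + x *~ 2 \/ z = 1 + y *~ 2) (1 + y *~ 2).
    exists [:: (1 + y *~ 2, true)]; split; first by move=> m; rewrite inE => /eqP ->; right.
    by rewrite /word_val big_cons big_nil mulr1.
  have [n En] := (Hg _).1 Ga; have [m Em] := (Hg _).1 Gb.
  have cab : GRing.comm (1 + x *~ 2) (1 + y *~ 2).
    rewrite En Em; apply: commrXz; apply/commr_sym; apply: commrXz; exact: commr_refl.
  have := Hfree [:: (1 + x *~ 2, true); (1 + y *~ 2, true); (1 + x *~ 2, false); (1 + y *~ 2, false)].
  rewrite /= (negbTE anb) eq_sym (negbTE anb) /=.
  have -> : word_val [:: (1 + x *~ 2, true); (1 + y *~ 2, true); (1 + x *~ 2, false); (1 + y *~ 2, false)] = 1.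
    rewrite /word_val !big_cons big_nil /letter_val /= mulr1.
    by rewrite mulrA cab -mulrA (mulrA (1 + x *~ 2)) (mulrV au) mul1r (mulrV bu).
  move=> Hc; suff : (1:A) != 1 by rewrite eqxx.
  apply: Hc => //.
  by move=> q; rewrite !inE => /or4P [] /eqP ->; [left|right|left|right].
Qed.
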